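(* Let $X\in\mathbb{R}^{m\times n}_+$, $W\in\mathbb{R}^{m\times r}$, $H\in\mathbb{R}^{r\times n}_+$ with $X=WH$ satisfying the facet-based conditions (FBC) for some parameter $s$, where $d=\operatorname{rank}(X)$, and assume $X$ has no duplicated columns. Let $\bar x=\frac1n\sum_{j=1}^n X(:,j)$, $e$ the all-ones vector, and assume $X-\bar x e^\top$ has rank $d-1$ with compact SVD $X-\bar xe^\top=U\Sigma V^\top$, $U\in\mathbb{R}^{m\times(d-1)}$. Let $\tilde X=U^\top(X-\bar xe^\top)\in\mathbb{R}^{(d-1)\times n}$ and $\tilde W=U^\top(W-\bar xe^\top)$. Then, for $\theta\in\mathbb{R}^{d-1}$, the set $\{x\in\operatorname{conv}(\tilde W): \theta^\top x=1\}$ is a facet of $\operatorname{conv}(\tilde W)$ if and only if $\theta$ is a vertex of $\operatorname{conv}(\tilde X)^*=\{\theta:\tilde X^\top\theta\le e\}$ and $\big|\{j: \tilde X(:,j)^\top\theta=1\}\big|\ge s$.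
   Context: For a matrix $M$, $\operatorname{conv}(M)$ denotes the convex hull of its columns. For a set $\mathcal A$ containing the origin in its interior, its dual is $\mathcal A^*=\{y: x^\top y\le 1 \text{ for all } x\in\mathcal A\}$. $|\mathcal A|$ denotes cardinality. A facet of a polytope is a face of dimension one less than the dimension of the polytope. The unit simplex is $\Delta^r=\{x\in\mathbb{R}^r: x\ge 0,\ \sum_i x_i=1\}$. Facet-based conditions (FBC) with parameter $s$ for $X=WH$, where $d=\operatorname{rank}(X)$: (a) no column of $W$ lies in the convex hull of the other columns of $W$; (b) $H(:,j)\in\Delta^r$ for all $j$; (c) each facet of $\operatorname{conv}(W)$ contains at least $s\ge d$ distinct columns of $X$, and among them at least $d-1$ generate that facet (the convex hull of these $s$ columns has dimension $d-2$); (d) every facet of $\operatorname{conv}(X)$ which is not a facet of $\operatorname{conv}(W)$ contains strictly fewer than $s$ distinct columns of $X$. *)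

(* Defs.v *)
From HB Require Import structures.
From mathcomp Require Import all_boot all_order all_algebra.
From mathcomp Require Import reals.
Set Implicit Arguments. Unset Strict Implicit. Unset Printing Implicit Defensive.
Import Order.TTheory GRing.Theory Num.Theory.
Local Open Scope ring_scope.

Section Defs.
Variable R : realType.

Definition dotp p (u v : 'cV[R]_p) : R := (u^T *m v) ord0 ord0.

Definition conv_sub p q (M : 'M[R]_(p, q)) (J : {set 'I_q}) (x : 'cV[R]_p) : Prop :=
  exists l : 'cV[R]_q,
    (forall j, 0 <= l j ord0) /\ (forall j, j \notin J -> l j ord0 = 0) /\
    \sum_j l j ord0 = 1 /\ x = M *m l.

Definition conv p q (M : 'M[R]_(p, q)) : 'cV[R]_p -> Prop := conv_sub M setT.

Definition dual p (A : 'cV[R]_p -> Prop) (y : 'cV[R]_p) : Prop :=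
  forall x, A x -> dotp x y <= 1.

(* S contains j+1 affinely independent points. *)
Definition dim_ge p (S : 'cV[R]_p -> Prop) (j : nat) : Prop :=
  exists M : 'M[R]_(p, j.+1),
    (forall i, S (col i M)) /\ \rank (col_mx M (const_mx 1 : 'M[R]_(1, j.+1))) = j.+1.

(* S has affine dimension k (k = -1 iff S is empty). *)
Definition affdim_is p (S : 'cV[R]_p -> Prop) (k : int) : Prop :=
  (-1 <= k) /\ forall j : nat, dim_ge S j <-> (j%:Z <= k).

(* F is a face of the convex set P: intersection of P with a supporting
   hyperplane (includes the empty face and P itself). *)
Definition is_face p (P F : 'cV[R]_p -> Prop) : Prop :=
  exists (a : 'cV[R]_p) (b : R),
    (forall x, P x -> dotp a x <= b) /\ (forall x, F x <-> (P x /\ dotp a x = b)).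

Definition is_facet p (P F : 'cV[R]_p -> Prop) : Prop :=
  is_face P F /\ exists k : int, affdim_is P k /\ affdim_is F (k - 1).

Definition is_vertex p (Q : 'cV[R]_p -> Prop) (t : 'cV[R]_p) : Prop :=
  Q t /\ forall y z (c : R), Q y -> Q z -> 0 < c < 1 ->
    t = c *: y + (1 - c) *: z -> y = z.

Definition FBC m n r (X : 'M[R]_(m, n)) (W : 'M[R]_(m, r)) (H : 'M[R]_(r, n))
    (s : nat) : Prop :=
  let d := \rank X in
  X = W *m H /\
  (forall k : 'I_r, ~ conv (col' k W) (col k W)) /\
  (forall j : 'I_n, (forall i, 0 <= H i j) /\ \sum_i H i j = 1) /\
  (d <= s)%N /\
  (forall F, is_facet (conv W) F ->
     (exists S : {set 'I_n},
        (s <= #|S|)%N /\ (forall j, j \in S -> F (col j X)) /\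
        {in S &, injective (fun j => col j X)} /\
        affdim_is (conv_sub X S) (d%:Z - 2))) /\
  (* (d) *)
  (forall G, is_facet (conv X) G -> ~ is_facet (conv W) G ->
     forall S : {set 'I_n}, (forall j, j \in S -> G (col j X)) ->
       {in S &, injective (fun j => col j X)} -> (#|S| < s)%N).

End Defs.

(* Main.v *)
Require Import Defs.
From HB Require Import structures.
From mathcomp Require Import all_boot all_order all_algebra.
From mathcomp Require Import reals.
From mathcomp Require Import ring lra zify.
From Stdlib Require Import Classical.
Set Implicit Arguments. Unset Strict Implicit. Unset Printing Implicit Defensive.
Import Order.TTheory GRing.Theory Num.Theory.
Local Open Scope ring_scope.


Section Basic.
Variable R : realType.

Lemma dotpE p (u v : 'cV[R]_p) : dotp u v = \sum_i u i ord0 * v i ord0.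
Proof. by rewrite /dotp mxE; apply: eq_bigr => i _; rewrite mxE. Qed.

Lemma dotpC p (u v : 'cV[R]_p) : dotp u v = dotp v u.
Proof. by rewrite !dotpE; apply: eq_bigr => i _; rewrite mulrC. Qed.

Lemma dotpDr p (u v w : 'cV[R]_p) : dotp u (v + w) = dotp u v + dotp u w.
Proof. by rewrite /dotp mulmxDr mxE. Qed.

Lemma dotpDl p (u v w : 'cV[R]_p) : dotp (v + w) u = dotp v u + dotp w u.
Proof. by rewrite dotpC dotpDr !(dotpC u). Qed.

Lemma dotpZr p (u v : 'cV[R]_p) c : dotp u (c *: v) = c * dotp u v.
Proof. by rewrite /dotp -scalemxAr mxE. Qed.

Lemma dotpZl p (u v : 'cV[R]_p) c : dotp (c *: v) u = c * dotp v u.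
Proof. by rewrite dotpC dotpZr dotpC. Qed.

Lemma dotpNr p (u v : 'cV[R]_p) : dotp u (- v) = - dotp u v.
Proof. by rewrite -scaleN1r dotpZr mulN1r. Qed.

Lemma dotpNl p (u v : 'cV[R]_p) : dotp (- v) u = - dotp v u.
Proof. by rewrite dotpC dotpNr dotpC. Qed.

Lemma dotpBr p (u v w : 'cV[R]_p) : dotp u (v - w) = dotp u v - dotp u w.
Proof. by rewrite dotpDr dotpNr. Qed.

Lemma dotpBl p (u v w : 'cV[R]_p) : dotp (v - w) u = dotp v u - dotp w u.
Proof. by rewrite dotpDl dotpNl. Qed.

Lemma dotp0r p (u : 'cV[R]_p) : dotp u 0 = 0.
Proof. by rewrite /dotp mulmx0 mxE. Qed.

Lemma dotp0l p (u : 'cV[R]_p) : dotp 0 u = 0.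
Proof. by rewrite dotpC dotp0r. Qed.

Lemma dotp_mull p q (A : 'M[R]_(q, p)) (u : 'cV[R]_p) (v : 'cV[R]_q) :
  dotp (A *m u) v = dotp u (A^T *m v).
Proof. by rewrite /dotp trmx_mul mulmxA. Qed.

Lemma dotp_mulr p q (A : 'M[R]_(p, q)) (u : 'cV[R]_p) (v : 'cV[R]_q) :
  dotp u (A *m v) = dotp (A^T *m u) v.
Proof. by rewrite dotp_mull trmxK. Qed.

Lemma dotp_sum p q (M : 'M[R]_(p, q)) (u : 'cV[R]_p) (l : 'cV[R]_q) :
  dotp u (M *m l) = \sum_j l j ord0 * dotp u (col j M).
Proof.
rewrite dotpE (eq_bigr (fun i => \sum_j u i ord0 * (M i j * l j ord0))); last first.
  by move=> i _; rewrite mxE big_distrr.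
rewrite exchange_big /=; apply: eq_bigr => j _; rewrite dotpE big_distrr /=.
by apply: eq_bigr => i _; rewrite mxE; ring.
Qed.

Lemma dotpvv_ge0 p (u : 'cV[R]_p) : 0 <= dotp u u.
Proof. by rewrite dotpE; apply: sumr_ge0 => i _; rewrite -expr2 sqr_ge0. Qed.

Lemma dotpvv_eq0 p (u : 'cV[R]_p) : dotp u u = 0 -> u = 0.
Proof.
rewrite dotpE => /eqP; rewrite psumr_eq0 => [/allP H|i _]; last by rewrite -expr2 sqr_ge0.
apply/matrixP => i j; rewrite (ord1 j) mxE.
have := H i (mem_index_enum i); rewrite -expr2 sqrf_eq0 /=.
by move/eqP.
Qed.

Definition AI p N (M : 'M[R]_(p, N)) : Prop :=
  forall mu : 'cV_N, M *m mu = 0 -> \sum_i mu i ord0 = 0 -> mu = 0.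

Lemma const1_mul N (mu : 'cV[R]_N) :
  (const_mx 1 : 'M[R]_(1, N)) *m mu = (\sum_i mu i ord0)%:M.
Proof.
apply/matrixP => i j; rewrite (ord1 i) (ord1 j) !mxE /=.
by apply: eq_bigr => l _; rewrite mxE mul1r.
Qed.

Lemma scal0M q : (0 : R)%:M = 0 :> 'M[R]_q.
Proof. by apply/matrixP => i j; rewrite !mxE mul0rn. Qed.

Lemma AI_rank p N (M : 'M[R]_(p, N)) :
  \rank (col_mx M (const_mx 1 : 'M[R]_(1, N))) = N <-> AI M.
Proof.
set C := col_mx _ _; split.
- move=> rk mu Mmu smu.
  have rf : row_free C^T by rewrite /row_free mxrank_tr rk.
  have : mu^T *m C^T = 0 *m C^T.
    by rewrite mul0mx -trmx_mul mul_col_mx Mmu const1_mul smu scal0M col_mx0 trmx0.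
  by move/(row_free_inj rf)/(congr1 trmx); rewrite trmxK trmx0.
- move=> ai; apply/eqP; rewrite -mxrank_tr; apply: inj_row_free => v.
  move/(congr1 trmx); rewrite trmx_mul trmxK trmx0 mul_col_mx => /eqP.
  rewrite -col_mx0 => /eqP /eq_col_mx [h1 h2].
  have := ai _ h1; rewrite const1_mul in h2.
  have := congr1 (fun A : 'M[R]_1 => A ord0 ord0) h2; rewrite !mxE /= mulr1n => hs.
  by move/(_ hs)/(congr1 trmx); rewrite trmxK trmx0.
Qed.

Lemma dim_geP p (S : 'cV[R]_p -> Prop) j :
  dim_ge S j <-> exists M : 'M[R]_(p, j.+1), (forall i, S (col i M)) /\ AI M.
Proof.
split=> [[M [h1 h2]]|[M [h1 h2]]]; exists M; split => //.
  by apply/AI_rank.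
by apply/AI_rank.
Qed.

End Basic.


Section Dim.
Variable R : realType.

Lemma col_matrixP p q (A B : 'M[R]_(p, q)) : (forall i, col i A = col i B) -> A = B.
Proof.
move=> h; apply/matrixP => a b; have := congr1 (fun v : 'cV[R]_p => v a ord0) (h b).
by rewrite !mxE.
Qed.

Definition Sel N a (w : 'I_a -> 'I_N) : 'M[R]_(N, a) := \matrix_(i, b) (i == w b)%:R.
Arguments Sel {N a} w.

Lemma mul_Sel p N a (w : 'I_a -> 'I_N) (M : 'M[R]_(p, N)) b :
  col b (M *m Sel w) = col (w b) M.
Proof.
apply/matrixP => x y; rewrite !mxE (bigD1 (w b)) //= mxE eqxx mulr1 big1 ?addr0 //.
by move=> i /negbTE hi; rewrite mxE hi mulr0.
Qed.

Lemma Sel_sum N a (w : 'I_a -> 'I_N) (mu : 'cV[R]_a) :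
  \sum_i (Sel w *m mu) i ord0 = \sum_i mu i ord0.
Proof.
under eq_bigr => i _ do rewrite mxE.
rewrite exchange_big /=; apply: eq_bigr => b _.
rewrite (bigD1 (w b)) //= mxE eqxx mul1r big1 ?addr0 //.
by move=> i /negbTE hi; rewrite mxE hi mul0r.
Qed.

Lemma Sel_entry N a (w : 'I_a -> 'I_N) (mu : 'cV[R]_a) b :
  injective w -> (Sel w *m mu) (w b) ord0 = mu b ord0.
Proof.
move=> wi; rewrite mxE (bigD1 b) //= mxE eqxx mul1r big1 ?addr0 //.
move=> i hi; rewrite mxE; case: eqP => [/wi e|_]; last by rewrite mul0r.
by rewrite e eqxx in hi.
Qed.

Lemma AI_Sel p N a (w : 'I_a -> 'I_N) (M : 'M[R]_(p, N)) :
  injective w -> AI M -> AI (M *m Sel w).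
Proof.
move=> wi ai mu h1 h2.
have := ai (Sel w *m mu); rewrite mulmxA h1 Sel_sum h2 => /(_ erefl erefl) h.
apply/matrixP => b c; rewrite (ord1 c) -(Sel_entry mu b wi) h !mxE //.
Qed.

Lemma dim_ge_sub p (S : 'cV[R]_p -> Prop) N (M : 'M[R]_(p, N)) j :
  (forall i, S (col i M)) -> AI M -> (j.+1 <= N)%N -> dim_ge S j.
Proof.
move=> hS ai hj; apply/dim_geP; exists (M *m Sel (widen_ord hj)); split.
  by move=> i; rewrite mul_Sel.
by apply: AI_Sel => // x y /(congr1 val) /= /val_inj.
Qed.

Lemma dim_ge_mono p (S : 'cV[R]_p -> Prop) i j :
  dim_ge S j -> (i <= j)%N -> dim_ge S i.
Proof.
move/dim_geP => [M [h1 h2]] hij; exact: (dim_ge_sub h1 h2).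
Qed.

Lemma dim_ge_subset p (S T : 'cV[R]_p -> Prop) j :
  (forall x, S x -> T x) -> dim_ge S j -> dim_ge T j.
Proof. by move=> hST [M [h1 h2]]; exists M; split => // i; apply: hST. Qed.

Lemma AI1 p (M : 'M[R]_(p, 1)) : AI M.
Proof.
move=> mu _; rewrite big_ord1 => h; apply/matrixP => a b.
by rewrite (ord1 a) (ord1 b) h mxE.
Qed.

Lemma dim_ge0 p (S : 'cV[R]_p -> Prop) x : S x -> dim_ge S 0.
Proof.
move=> Sx; apply/dim_geP; exists x; split; last exact: AI1.
by move=> i; rewrite (ord1 i) /=; have -> : col ord0 x = x by apply/matrixP => a b; rewrite (ord1 b) mxE.
Qed.

Lemma col_aff p p' q (A : 'M[R]_(p', p)) (c : 'cV[R]_p') (M : 'M[R]_(p, q)) i :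
  col i (A *m M + c *m const_mx 1) = A *m col i M + c.
Proof.
apply/matrixP => a b; rewrite (ord1 b) !mxE; congr (_ + _).
  by apply: eq_bigr => l _; rewrite !mxE.
by rewrite big_ord1 !mxE mulr1.
Qed.

Lemma dim_ge_transfer p p' (S : 'cV[R]_p -> Prop) (T : 'cV[R]_p' -> Prop)
   (A : 'M[R]_(p', p)) (c : 'cV[R]_p') (B : 'M[R]_(p, p')) (e : 'cV[R]_p) j :
  (forall x, S x -> T (A *m x + c) /\ B *m (A *m x + c) + e = x) ->
  dim_ge S j -> dim_ge T j.
Proof.
move=> hST /dim_geP [M [h1 h2]]; apply/dim_geP.
exists (A *m M + c *m const_mx 1); split.
  by move=> i; rewrite col_aff; apply: (hST _ (h1 i)).1.
move=> mu e1 e2; apply: h2 => //.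
have -> : M = B *m (A *m M + c *m const_mx 1) + e *m const_mx 1.
  apply: col_matrixP => i; rewrite col_aff col_aff.
  by rewrite (hST _ (h1 i)).2.
by rewrite mulmxDl -mulmxA e1 mulmx0 add0r -mulmxA const1_mul e2 scal0M mulmx0.
Qed.

Lemma int_le_aux (x y : int) : (-1 <= x) -> (-1 <= y) ->
  (forall j : nat, (j%:Z <= x) -> (j%:Z <= y)) -> x <= y.
Proof.
move=> hx hy hxy; have [hx0|hx0] := leP 0 x.
  have e : x = (`|x|%N)%:Z by rewrite gez0_abs.
  by rewrite e; apply: hxy; rewrite -e.
lia.
Qed.

Lemma affdim_uniq p (S : 'cV[R]_p -> Prop) a b :
  affdim_is S a -> affdim_is S b -> a = b.
Proof.
move=> [ha1 ha2] [hb1 hb2].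
apply/eqP; rewrite eq_le; apply/andP; split.
  by apply: int_le_aux => // j hj; apply/hb2/ha2.
by apply: int_le_aux => // j hj; apply/ha2/hb2.
Qed.

End Dim.
Arguments Sel {R N a} w.


Section Face.
Variable R : realType.

Lemma mk_affdim p (S : 'cV[R]_p -> Prop) (K : nat) :
  (forall j, dim_ge S j -> (j < K)%N) -> (forall j, (j < K)%N -> dim_ge S j) ->
  affdim_is S (K%:Z - 1).
Proof.
move=> h1 h2; split; first lia.
move=> j; split; first by move/h1; lia.
by move=> hj; apply: h2; lia.
Qed.

Lemma mk_affdimK p (S : 'cV[R]_p -> Prop) (K : nat) :
  (forall j, dim_ge S j -> (j <= K)%N) -> (forall j, (j <= K)%N -> dim_ge S j) ->
  affdim_is S K%:Z.
Proof.
move=> h1 h2; split; first lia.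
move=> j; split; first by move/h1; lia.
by move=> hj; apply: h2; lia.
Qed.

Lemma affdimP p (S : 'cV[R]_p -> Prop) k j :
  affdim_is S k -> dim_ge S j <-> j%:Z <= k.
Proof. by case=> _ h; apply: h. Qed.

Lemma affdim_ext p (S T : 'cV[R]_p -> Prop) k :
  (forall x, S x <-> T x) -> affdim_is S k -> affdim_is T k.
Proof.
move=> e [h1 h2]; split => // j; rewrite -h2; split; apply: dim_ge_subset => x; by case: (e x).
Qed.

Lemma col_row_mx p N (M : 'M[R]_(p, N)) (q : 'cV[R]_p) (S : 'cV[R]_p -> Prop) :
  (forall i, S (col i M)) -> S q -> forall i, S (col i (row_mx M q)).
Proof.
move=> hM hq i; rewrite -(splitK i); case: (split i) => l /=.
  have -> : col (lshift 1 l) (row_mx M q) = col l M.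
    by apply/matrixP => a b; rewrite [LHS]mxE row_mxEl [RHS]mxE.
  exact: hM.
have -> : col (rshift N l) (row_mx M q) = q.
  by apply/matrixP => a b; rewrite [LHS]mxE row_mxEr (ord1 l) (ord1 b).
exact: hq.
Qed.

Lemma AI_ext p N (M : 'M[R]_(p, N)) (q a : 'cV[R]_p) (be : R) :
  AI M -> (forall i, dotp a (col i M) = be) -> dotp a q != be ->
  AI (row_mx M q).
Proof.
move=> ai hM hq mu.
rewrite -(vsubmxK mu) mul_row_col.
set u := usubmx mu; set d := dsubmx mu.
move=> e1; rewrite big_split_ord /= big_ord1 => e2.
have eu : \sum_(i < N) col_mx u d (lshift 1 i) ord0 = \sum_i u i ord0.
  by apply: eq_bigr => i _; rewrite col_mxEu.
have ed : col_mx u d (rshift N ord0) ord0 = d ord0 ord0 by rewrite col_mxEd.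
rewrite eu ed in e2.
have := congr1 (dotp a) e1; rewrite dotp0r dotpDr dotp_sum.
under eq_bigr => i _ do rewrite hM.
rewrite -big_distrl /= (mx11_scalar d) mul_mx_scalar dotpZr.
have -> : \sum_i u i ord0 = - d ord0 ord0 by apply/eqP; rewrite -addr_eq0 e2.
move=> e3.
have d0 : d ord0 ord0 = 0.
  have : d ord0 ord0 * (dotp a q - be) = 0 by rewrite -e3; ring.
  by move/eqP; rewrite mulf_eq0 subr_eq0 (negbTE hq) orbF => /eqP.
have dz : d = 0 by rewrite (mx11_scalar d) d0 scal0M.
have u0 : u = 0.
  apply: ai; last by move: e2; rewrite d0 addr0.
  by move: e1; rewrite (mx11_scalar d) d0 scal0M mulmx0 addr0.
by rewrite u0 d0 scal0M col_mx0.
Qed.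

Lemma facet_of p (P : 'cV[R]_p -> Prop) (a : 'cV[R]_p) (b : R) (K : nat) :
  (forall x, P x -> dotp a x <= b) -> affdim_is P K%:Z ->
  (exists x, P x /\ dotp a x != b) ->
  (forall j, (j < K)%N -> dim_ge (fun x => P x /\ dotp a x = b) j) ->
  is_facet P (fun x => P x /\ dotp a x = b) /\
  affdim_is (fun x => P x /\ dotp a x = b) (K%:Z - 1).
Proof.
move=> hle hP [x0 [Px0 hx0]] hlow.
have hF : affdim_is (fun x => P x /\ dotp a x = b) (K%:Z - 1).
  apply: mk_affdim => // j /dim_geP [M [h1 h2]].
  have hai := AI_ext h2 (fun i => (h1 i).2) hx0.
  have hcol := col_row_mx (fun i => (h1 i).1) Px0.
  have := dim_ge_sub (j := j.+1) hcol hai; rewrite addn1 => /(_ (leqnn _)).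
  by move/(affdimP _ hP); lia.
split => //; split; first by exists a, b; split.
by exists K%:Z; split.
Qed.

Lemma facet_dims p (P F : 'cV[R]_p -> Prop) (k : int) :
  is_facet P F -> affdim_is P k -> affdim_is F (k - 1).
Proof.
move=> [_ [k' [h1 h2]]] hP; by rewrite (affdim_uniq hP h1).
Qed.

Lemma convP p q (M : 'M[R]_(p, q)) x :
  conv M x <-> exists l : 'cV[R]_q,
    (forall j, 0 <= l j ord0) /\ \sum_j l j ord0 = 1 /\ x = M *m l.
Proof.
split => [[l [h1 [_ [h3 h4]]]]|[l [h1 [h3 h4]]]]; exists l; split => //.
by split => // j; rewrite in_setT.
Qed.

Lemma conv_col p q (M : 'M[R]_(p, q)) j : conv M (col j M).
Proof.
apply/convP; exists (delta_mx j ord0); split.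
  by move=> i; rewrite mxE; case: (_ && _).
split; last by rewrite colE.
rewrite (bigD1 j) //= mxE !eqxx /= big1 ?addr0 // => i /negbTE hi.
by rewrite mxE hi.
Qed.

Lemma conv_centroid p q (M : 'M[R]_(p, q)) : (0 < q)%N ->
  conv M (q%:R^-1 *: (M *m const_mx 1)).
Proof.
move=> hq; apply/convP; exists (q%:R^-1 *: const_mx 1); split.
  by move=> j; rewrite !mxE mulr1 invr_ge0 ler0n.
split; last by rewrite scalemxAr.
under eq_bigr => j _ do rewrite !mxE mulr1.
rewrite sumr_const card_ord -[LHS]mulr_natr mulVf //.
by rewrite pnatr_eq0 -lt0n.
Qed.

Lemma conv_le p q (M : 'M[R]_(p, q)) (a : 'cV[R]_p) b x :
  (forall j, dotp a (col j M) <= b) -> conv M x -> dotp a x <= b.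
Proof.
move=> h /convP [l [h1 [h2 ->]]]; rewrite dotp_sum.
have -> : b = \sum_j l j ord0 * b by rewrite -big_distrl /= h2 mul1r.
by apply: ler_sum => j _; apply: ler_wpM2l.
Qed.

Lemma conv_sub_eq p q (M : 'M[R]_(p, q)) (S : {set 'I_q}) (a : 'cV[R]_p) b x :
  (forall j, j \in S -> dotp a (col j M) = b) -> conv_sub M S x -> dotp a x = b.
Proof.
move=> h [l [h1 [h0 [h2 ->]]]]; rewrite dotp_sum.
rewrite -[b]mul1r -h2 big_distrl /=; apply: eq_bigr => j _.
case: (boolP (j \in S)) => hj; first by rewrite h.
by rewrite h0 // !mul0r.
Qed.

Lemma conv_sub_conv p q (M : 'M[R]_(p, q)) (S : {set 'I_q}) x : conv_sub M S x -> conv M x.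
Proof. by move=> [l [h1 [h0 [h2 h3]]]]; apply/convP; exists l. Qed.

Lemma conv_stoch p q r (W : 'M[R]_(p, r)) (H : 'M[R]_(r, q)) x :
  (forall j, (forall i, 0 <= H i j) /\ \sum_i H i j = 1) ->
  conv (W *m H) x -> conv W x.
Proof.
move=> hH /convP [l [h1 [h2 ->]]]; apply/convP; exists (H *m l); split.
  move=> i; rewrite mxE; apply: sumr_ge0 => j _; apply: mulr_ge0 => //.
  exact: (hH j).1.
split; last by rewrite mulmxA.
under eq_bigr => i _ do rewrite mxE.
rewrite exchange_big /= -h2; apply: eq_bigr => j _.
by rewrite -big_distrl /= (hH j).2 mul1r.
Qed.

Lemma conv_aff p p' q (M : 'M[R]_(p, q)) (N : 'M[R]_(p', q)) (A : 'M[R]_(p', p))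
   (c : 'cV[R]_p') x :
  N = A *m M + c *m const_mx 1 -> conv M x -> conv N (A *m x + c).
Proof.
move=> -> /convP [l [h1 [h2 ->]]]; apply/convP; exists l; split => //; split => //.
by rewrite mulmxDl -!mulmxA const1_mul h2 mul_mx_scalar scale1r.
Qed.

End Face.


Section Lin.
Variable R : realType.

Lemma extract p q (B : 'M[R]_(p, q)) :
  exists (K : nat) (f : 'I_K -> 'I_q), K = \rank B /\ injective f /\
    forall mu : 'cV[R]_K, B *m Sel f *m mu = 0 -> mu = 0.
Proof.
exists (\rank B^T), (maxrankfun B^T); split; first by rewrite mxrank_tr.
split; first exact: maxrankfun_inj.
have rf := maxrowsub_free B^T.
have e : rowsub (maxrankfun B^T) B^T = (B *m Sel (maxrankfun B^T))^T.
  apply/matrixP => a b; rewrite [RHS]mxE.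
  have := congr1 (fun v : 'cV[R]_p => v b ord0) (mul_Sel (maxrankfun B^T) B a).
  by rewrite !mxE => ->.
rewrite e in rf.
move=> mu h; have : mu^T *m (B *m Sel (maxrankfun B^T))^T = 0 *m (B *m Sel (maxrankfun B^T))^T.
  by rewrite -trmx_mul h trmx0 mul0mx.
by move/(row_free_inj rf)/(congr1 trmx); rewrite trmxK trmx0.
Qed.

Lemma dichot p q (B : 'M[R]_(p, q)) :
  (\rank B < p)%N -> exists d : 'cV[R]_p, d != 0 /\ d^T *m B = 0.
Proof.
move=> hr; have : kermx B != 0.
  by rewrite -mxrank_eq0 mxrank_ker; apply/eqP; lia.
move=> nz; have [i hi] : exists i, row i (kermx B) != 0.
  apply/existsP; apply: contraR nz => /existsPn h.
  by apply/eqP/row_matrixP => i; rewrite row0; apply/eqP; move: (h i); rewrite negbK.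
exists (row i (kermx B))^T; split; first by rewrite -trmx0 (inj_eq trmx_inj).
rewrite trmxK; apply/sub_kermxP; exact: row_sub.
Qed.

Lemma basis_ker k (Q : 'M[R]_k) :
  (forall mu : 'cV[R]_k, Q *m mu = 0 -> mu = 0) -> forall v : 'cV[R]_k, v^T *m Q = 0 -> v = 0.
Proof.
move=> h v hv.
have rf : row_free Q^T.
  apply: inj_row_free => w hw; have := h w^T.
  by rewrite -[Q *m _]trmxK trmx_mul trmxK hw trmx0 => /(_ erefl) /(congr1 trmx); rewrite trmxK trmx0.
have rf2 : row_free Q by rewrite row_free_unit -unitmx_tr -row_free_unit.
have : v^T *m Q = 0 *m Q by rewrite mul0mx.
by move/(row_free_inj rf2)/(congr1 trmx); rewrite trmxK trmx0.
Qed.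

Lemma AI_lin p N (M : 'M[R]_(p, N)) (th : 'cV[R]_p) :
  AI M -> (forall i, dotp th (col i M) = 1) -> forall mu : 'cV[R]_N, M *m mu = 0 -> mu = 0.
Proof.
move=> ai h mu hm; apply: ai => //.
have := congr1 (dotp th) hm; rewrite dotp0r dotp_sum.
by under eq_bigr => i _ do rewrite h mulr1.
Qed.

Lemma lin_AI p N (M : 'M[R]_(p, N)) :
  (forall mu : 'cV[R]_N, M *m mu = 0 -> mu = 0) -> AI M.
Proof. by move=> h mu hm _; apply: h. Qed.

Definition zcols p q (Y : 'M[R]_(p, q)) (A : {set 'I_q}) : 'M[R]_(p, q) :=
  Y *m diag_mx (\row_i (i \in A)%:R).

Lemma col_zcols p q (Y : 'M[R]_(p, q)) A i :
  col i (zcols Y A) = if i \in A then col i Y else 0.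
Proof.
apply/matrixP => a b; rewrite !mxE (bigD1 i) //= big1 ?addr0.
  by rewrite !mxE eqxx mulr1n; case: (i \in A); rewrite ?mulr1 ?mulr0 ?mxE.
by move=> l /negbTE hl; rewrite !mxE hl mulr0n mulr0.
Qed.

Lemma greedy_dir p q (Y : 'M[R]_(p, q)) (A : {set 'I_q}) :
  (\rank (zcols Y A) < \rank Y)%N ->
  exists mu : 'cV[R]_q, Y *m mu != 0 /\ (Y *m mu)^T *m zcols Y A = 0.
Proof.
move=> hr; set G := Y^T *m zcols Y A.
have hG : (\rank G <= \rank (zcols Y A))%N by apply: mxrankM_maxr.
have nsub : ~~ (kermx G <= kermx Y^T)%MS.
  apply/negP => /mxrankS; rewrite !mxrank_ker mxrank_tr.
  have := rank_leq_col Y; lia.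
have [i hi] := row_subPn nsub.
exists (row i (kermx G))^T; split.
  apply: contra hi => /eqP h; apply/sub_kermxP.
  by rewrite -[row i _]trmxK -trmx_mul h trmx0.
rewrite trmx_mul trmxK -mulmxA; apply/sub_kermxP; exact: row_sub.
Qed.

Lemma rank_addle p q (A B : 'M[R]_(p, q)) : (\rank (A + B)%R <= \rank A + \rank B)%N.
Proof.
apply: leq_trans (mxrank_adds_leqif A B).
by apply: mxrankS; apply: addmx_sub_adds.
Qed.

Lemma rank_col0 p q r (A : 'M[R]_(p, q)) : \rank (col_mx A (0 : 'M[R]_(r, q))) = \rank A.
Proof.
by rewrite -addsmxE addsmx0.
Qed.

End Lin.

Section Lin2.
Variable R : realType.

Lemma basis_ker2 k N (M : 'M[R]_(k, N)) :
  (forall mu : 'cV[R]_N, M *m mu = 0 -> mu = 0) -> (k <= N)%N ->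
  forall v : 'cV[R]_k, v^T *m M = 0 -> v = 0.
Proof.
move=> h hk v hv.
have rf : row_free M^T.
  apply: inj_row_free => w hw; have := h w^T.
  by rewrite -[M *m _]trmxK trmx_mul trmxK hw trmx0 => /(_ erefl) /(congr1 trmx); rewrite trmxK trmx0.
have rf2 : row_free M.
  move: rf; rewrite /row_free mxrank_tr => /eqP e.
  have := rank_leq_row M; rewrite e => hN; apply/eqP; have := rank_leq_row M; lia.
have : v^T *m M = 0 *m M by rewrite mul0mx.
by move/(row_free_inj rf2)/(congr1 trmx); rewrite trmxK trmx0.
Qed.

Lemma rowv_entry p N (v : 'cV[R]_p) (M : 'M[R]_(p, N)) l :
  (v^T *m M) ord0 l = dotp v (col l M).
Proof. by rewrite /dotp !mxE; apply: eq_bigr => i _; rewrite !mxE. Qed.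

Lemma rowv0 p N (v : 'cV[R]_p) (M : 'M[R]_(p, N)) :
  (forall l, dotp v (col l M) = 0) -> v^T *m M = 0.
Proof.
move=> h; apply/matrixP => a b; rewrite (ord1 a) rowv_entry h mxE //.
Qed.

Lemma rowv0_inv p N (v : 'cV[R]_p) (M : 'M[R]_(p, N)) l :
  v^T *m M = 0 -> dotp v (col l M) = 0.
Proof. by move=> h; rewrite -rowv_entry h mxE. Qed.

End Lin2.


Section Poly.
Variable R : realType.

Lemma argmin_ex q (P : pred 'I_q) (F : 'I_q -> R) i0 :
  P i0 -> exists i, P i /\ forall j, P j -> F i <= F j.
Proof. by move=> Pi0; case: (arg_minP F Pi0) => i Pi h; exists i. Qed.

Variables (p q : nat) (Y : 'M[R]_(p, q)).
Hypothesis q0 : (0 < q)%N.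
Let ybar : 'cV[R]_p := q%:R^-1 *: (Y *m const_mx 1).
Let Yc := Y - ybar *m (const_mx 1 : 'M[R]_(1, q)).

Lemma Yc_sum : Yc *m (const_mx 1 : 'cV[R]_q) = 0.
Proof.
rewrite /Yc mulmxBl -mulmxA.
have -> : (const_mx 1 : 'M[R]_(1, q)) *m (const_mx 1 : 'cV[R]_q) = (q%:R : R)%:M.
  by rewrite const1_mul; congr (_%:M); under eq_bigr => i _ do rewrite mxE; rewrite sumr_const card_ord.
rewrite mul_mx_scalar /ybar scalerA mulfV ?scale1r ?subrr //.
by rewrite pnatr_eq0 -lt0n.
Qed.

Lemma Yc_dotsum (d : 'cV[R]_p) : \sum_i dotp d (col i Yc) = 0.
Proof.
have := congr1 (dotp d) Yc_sum; rewrite dotp0r dotp_sum.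
by under eq_bigr => i _ do rewrite mxE mul1r.
Qed.

Lemma convYc x : conv Y x -> exists l : 'cV[R]_q,
  (forall j, 0 <= l j ord0) /\ \sum_j l j ord0 = 1 /\ x - ybar = Yc *m l.
Proof.
move/convP => [l [h1 [h2 ->]]]; exists l; split => //; split => //.
by rewrite /Yc mulmxBl -mulmxA const1_mul h2 mul_mx_scalar scale1r.
Qed.

Lemma ybar_conv : conv Y ybar.
Proof. exact: conv_centroid. Qed.

Lemma conv_Y_le (a : 'cV[R]_p) x :
  (forall i, dotp a (col i Yc) <= 1) -> conv Y x -> dotp a x <= 1 + dotp a ybar.
Proof.
move=> h /convYc [l [h1 [h2 e]]].
have : dotp a (x - ybar) <= 1.
  rewrite e dotp_sum -h2; apply: ler_sum => j _.
  by rewrite -[X in _ <= X]mulr1; apply: ler_wpM2l.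
by rewrite dotpBr; lra.
Qed.

Lemma dim_conv_le j : dim_ge (conv Y) j -> (j <= \rank Yc)%N.
Proof.
move/dim_geP => [M [h1 h2]]; move/AI_rank: h2 => rk.
have /fin_all_exists [l hl] : forall i, exists l : 'cV[R]_q,
   (forall j, 0 <= l j ord0) /\ \sum_j l j ord0 = 1 /\ col i M = Y *m l.
  by move=> i; apply/convP.
set L : 'M[R]_(q, j.+1) := \matrix_(a, i) l i a ord0.
have eM : M = Y *m L.
  apply: col_matrixP => i; rewrite (hl i).2.2; apply/matrixP => a b.
  rewrite (ord1 b) !mxE; apply: eq_bigr => c _; by rewrite !mxE.
have e1 : (const_mx 1 : 'M[R]_(1, q)) *m L = const_mx 1.
  apply/matrixP => a b; rewrite (ord1 a) !mxE -[RHS](hl b).2.1.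
  by apply: eq_bigr => c _; rewrite !mxE mul1r.
have eC : col_mx M (const_mx 1 : 'M[R]_(1, j.+1)) =
   (col_mx Yc 0 *m L + col_mx ybar (1 : 'M[R]_1) *m const_mx 1)%R.
  rewrite !mul_col_mx mul0mx mul1mx add_col_mx add0r; congr col_mx.
  by rewrite eM /Yc mulmxBl -mulmxA e1 subrK.
have := rank_addle (col_mx Yc 0 *m L) (col_mx ybar (1%R : 'M[R]_1) *m const_mx 1%R).
rewrite -eC rk.
have r1 : (\rank (col_mx Yc (0 : 'M[R]_(1, q)) *m L) <= \rank Yc)%N.
  by apply: leq_trans (mxrankM_maxl _ _) _; rewrite rank_col0.
have r2 : (\rank (col_mx ybar (1%R : 'M[R]_1) *m (const_mx 1%R : 'M[R]_(1, j.+1))) <= 1)%N.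
  exact: leq_trans (mxrankM_maxr _ _) (rank_leq_row _).
lia.
Qed.

Definition act (a : 'cV[R]_p) := [set i | dotp a (col i Yc) == 1].

Lemma rank_zcols_le A : (\rank (zcols Yc A) <= \rank Yc)%N.
Proof. exact: mxrankM_maxl. Qed.

Lemma pos_exists (mu : 'cV[R]_q) : Yc *m mu != 0 ->
  exists i, 0 < dotp (Yc *m mu) (col i Yc).
Proof.
move=> nz; apply/existsP; apply: contraR nz => /existsPn h; apply/eqP.
set d := Yc *m mu.
have hle : forall i, dotp d (col i Yc) <= 0.
  by move=> i; move: (h i); rewrite -leNgt.
have h0 : forall i, dotp d (col i Yc) = 0.
  move=> i; apply/eqP; rewrite eq_le hle /=.
  have : \sum_i - dotp d (col i Yc) == 0 by rewrite sumrN Yc_dotsum oppr0.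
  rewrite psumr_eq0 => [/allP /(_ i (mem_index_enum i))|j _]; last by rewrite oppr_ge0.
  by rewrite /= oppr_eq0 => /eqP ->.
apply: dotpvv_eq0.
have -> : dotp d d = \sum_i mu i ord0 * dotp d (col i Yc) by rewrite /d dotp_sum.
by rewrite big1 // => i _; rewrite h0 mulr0.
Qed.

Definition good (g a : 'cV[R]_p) := (forall i, dotp a (col i Yc) <= 1) /\ dotp a g <= 0.

Lemma zcols_sub (A B : {set 'I_q}) : A \subset B ->
  zcols Yc A = zcols (zcols Yc B) A.
Proof.
move=> sAB; apply: col_matrixP => i; rewrite !col_zcols.
case: (boolP (i \in A)) => // hi; by rewrite (subsetP sAB i hi).
Qed.

Lemma greedy_step g a : good g a -> (\rank (zcols Yc (act a)) < \rank Yc)%N ->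
  exists a', good g a' /\ (\rank (zcols Yc (act a)) < \rank (zcols Yc (act a')))%N.
Proof.
move=> [ha hg] hr; have [mu [nz ort]] := greedy_dir hr.
have [s [mu' [e1 [e2 e3]]]] : exists s : R, exists mu' : 'cV[R]_q, mu' = s *: mu /\ (s = 1 \/ s = -1) /\
   dotp (Yc *m mu') g <= 0.
  case: (lerP (dotp (Yc *m mu) g) 0) => hs.
    by exists 1, mu; rewrite scale1r; split => //; split => //; left.
  exists (-1), (-1 *: mu); split => //; split; first by right.
  by rewrite -scalemxAr dotpZl; lra.
set d := Yc *m mu'.
have dnz : d != 0.
  rewrite /d e1 -scalemxAr; case: e2 => ->; first by rewrite scale1r.
  by rewrite scaleN1r oppr_eq0.
have dort : d^T *m zcols Yc (act a) = 0.
  rewrite /d e1 -scalemxAr.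
  have -> : (s *: (Yc *m mu))^T = s *: (Yc *m mu)^T by apply/matrixP => a0 b0; rewrite !mxE.
  by rewrite -scalemxAl ort scaler0.
have [i0 hi0] := pos_exists dnz.
set P := fun i => 0 < dotp d (col i Yc).
set F := fun i => (1 - dotp a (col i Yc)) / dotp d (col i Yc).
have [i1 [Pi1 hmin]] := argmin_ex F (P:=P) hi0.
set t := F i1.
have t0 : 0 <= t by rewrite /t /F divr_ge0 // ?subr_ge0 // ltW.
set a' := a + t *: d.
have dact : forall i, i \in act a -> dotp d (col i Yc) = 0.
  move=> i hi; have := congr1 (fun M : 'M[R]_(1, q) => M *m delta_mx i (ord0 : 'I_1)) dort.
  rewrite /= -mulmxA -colE col_zcols hi mul0mx => h.
  by rewrite /dotp h mxE.
exists a'; split; first split.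
- move=> i; rewrite /a' dotpDl dotpZl.
  case: (lerP (dotp d (col i Yc)) 0) => hd.
    have := ha i; have : t * dotp d (col i Yc) <= 0 by rewrite mulr_ge0_le0.
    lra.
  have h : t * dotp d (col i Yc) <= 1 - dotp a (col i Yc) by rewrite -ler_pdivlMr //; exact: hmin i hd.
  lra.
- rewrite /a' dotpDl dotpZl; have : 0 <= t * - dotp d g.
    by apply: mulr_ge0 => //; rewrite oppr_ge0.
  lra.
have sub : act a \subset act a'.
  apply/subsetP => i; rewrite !inE /a' dotpDl dotpZl => hi.
  by rewrite (eqP hi) (dact i) ?inE // mulr0 addr0.
have isact : i1 \in act a'.
  rewrite inE /a' dotpDl dotpZl /t /F divfK; first by apply/eqP; ring.
  by rewrite gt_eqF.
have : ((zcols Yc (act a))^T < (zcols Yc (act a'))^T)%MS.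
  rewrite ltmxE; apply/andP; split.
    by rewrite (zcols_sub sub) /zcols trmx_mul submxMl.
  apply/negP => hsub.
  have : (row i1 (zcols Yc (act a'))^T <= (zcols Yc (act a))^T)%MS.
    exact: submx_trans (row_sub _ _) hsub.
  case/submxP => w hw.
  have e : row i1 (zcols Yc (act a'))^T = (col i1 Yc)^T.
    by rewrite -tr_col col_zcols isact.
  have := congr1 (fun v : 'rV[R]_p => (v *m d) ord0 ord0) hw.
  rewrite e -mulmxA.
  have -> : (zcols Yc (act a))^T *m d = 0.
    by rewrite -[d]trmxK -trmx_mul dort trmx0.
  rewrite mulmx0 => h0.
  have : dotp (col i1 Yc) d = 0 by rewrite /dotp h0 mxE.
  by rewrite dotpC => h1; move: Pi1; rewrite /P h1 ltxx.
by rewrite ltmxErank !mxrank_tr => /andP [].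
Qed.

Lemma greedy g : exists a, good g a /\ \rank (zcols Yc (act a)) = \rank Yc.
Proof.
have : forall n a, good g a -> (\rank Yc - \rank (zcols Yc (act a)) <= n)%N ->
    exists a', good g a' /\ \rank (zcols Yc (act a')) = \rank Yc.
  elim=> [|n IH] a ga hn.
    exists a; split => //; have := rank_zcols_le (act a); lia.
  case: (ltnP (\rank (zcols Yc (act a))) (\rank Yc)) => hr; last first.
    exists a; split => //; have := rank_zcols_le (act a); lia.
  have [a' [ga' hlt]] := greedy_step ga hr.
  apply: (IH a' ga'); have := rank_zcols_le (act a'); lia.
move/(_ (\rank Yc) 0); apply.
  by split; [move=> i; rewrite dotp0l ler01 | rewrite dotp0l].
lia.
Qed.

End Poly.


Section Poly2.
Variable R : realType.
Variables (p q : nat) (Y : 'M[R]_(p, q)).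
Hypothesis q0 : (0 < q)%N.
Let ybar : 'cV[R]_p := q%:R^-1 *: (Y *m const_mx 1).
Let Yc := Y - ybar *m (const_mx 1 : 'M[R]_(1, q)).

Lemma col_Yc i : col i Yc = col i Y - ybar.
Proof.
apply/matrixP => a b; rewrite (ord1 b) !mxE big_ord1 !mxE mulr1 //.
Qed.

Lemma facet_low (a : 'cV[R]_p) :
  \rank (zcols Yc (act Y a)) = \rank Yc ->
  (forall j, (j < \rank Yc)%N ->
     dim_ge (fun x => conv Y x /\ dotp a x = 1 + dotp a ybar) j) /\
  (forall x, conv Y x -> dotp a x != 1 + dotp a ybar -> dim_ge (conv Y) (\rank Yc)).
Proof.
move=> hr.
have [K [f [eK [fi find]]]] := extract (zcols Yc (act Y a)).
have fact : forall l, f l \in act Y a.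
  move=> l; case: (boolP (f l \in act Y a)) => // hl.
  have := find (delta_mx l ord0).
  rewrite -colE mul_Sel col_zcols (negbTE hl) => /(_ erefl) /matrixP /(_ l ord0).
  by rewrite !mxE !eqxx /= => /eqP; rewrite oner_eq0.
have ez : zcols Yc (act Y a) *m Sel f = Yc *m Sel f.
  by apply: col_matrixP => l; rewrite !mul_Sel col_zcols fact.
set M := Y *m Sel f.
have hM : forall l, conv Y (col l M) /\ dotp a (col l M) = 1 + dotp a ybar.
  move=> l; rewrite /M mul_Sel; split; first exact: conv_col.
  have := fact l; rewrite inE col_Yc dotpBr => /eqP; lra.
have aiM : AI M.
  move=> mu h1 h2; apply: find; rewrite ez.
  rewrite /Yc !mulmxBl -/M h1 -!mulmxA const1_mul Sel_sum h2 scal0M mulmx0.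
  by rewrite subr0.
split.
  move=> j hj; apply: (dim_ge_sub (M := M) _ aiM).
    by move=> l; exact: (hM l).
  by rewrite eK hr.
move=> x cx nx.
have ai2 := AI_ext aiM (fun l => (hM l).2) nx.
have hc := col_row_mx (fun l => (hM l).1) cx.
apply: (dim_ge_sub hc ai2); rewrite addn1 eK hr //.
Qed.

Lemma affdim_conv : affdim_is (conv Y) (\rank Yc)%:Z.
Proof.
apply: mk_affdimK; first by move=> j; apply: dim_conv_le.
have [a [[ha _] hr]] := greedy Y q0 0.
have := (facet_low hr).2 _ (ybar_conv Y q0).
have : dotp a ybar != 1 + dotp a ybar by apply/eqP; lra.
move=> h /(_ h) hd j hj; exact: dim_ge_mono hd hj.
Qed.

Lemma facet_exists (g : 'cV[R]_p) : exists a : 'cV[R]_p,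
  (forall x, conv Y x -> dotp a x <= 1 + dotp a ybar) /\ dotp a g <= 0 /\
  is_facet (conv Y) (fun x => conv Y x /\ dotp a x = 1 + dotp a ybar) /\
  affdim_is (fun x => conv Y x /\ dotp a x = 1 + dotp a ybar) ((\rank Yc)%:Z - 1).
Proof.
have [a [[ha hg] hr]] := greedy Y q0 g.
have hle : forall x, conv Y x -> dotp a x <= 1 + dotp a ybar.
  by move=> x; apply: conv_Y_le.
exists a; split => //; split => //.
apply: facet_of => //; first exact: affdim_conv.
  exists ybar; split; first exact: ybar_conv Y q0.
  by apply/eqP; lra.
exact: (facet_low hr).1.
Qed.

End Poly2.


Lemma colM (R : realType) p q t (A : 'M[R]_(p,q)) (B : 'M[R]_(q,t)) i :
  col i (A *m B) = A *m col i B.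
Proof. by rewrite !colE mulmxA. Qed.

Lemma colC (R : realType) p q (M : 'M[R]_(p, q)) (c : 'cV[R]_p) i :
  col i (M - c *m (const_mx 1 : 'M[R]_(1, q))) = col i M - c.
Proof. by apply/matrixP => a b; rewrite (ord1 b) !mxE big_ord1 !mxE mulr1. Qed.

Lemma convC (R : realType) p q (M : 'M[R]_(p, q)) (c : 'cV[R]_p) x :
  conv M x -> exists l : 'cV[R]_q, x - c = (M - c *m (const_mx 1 : 'M[R]_(1, q))) *m l.
Proof.
move/convP => [l [_ [h2 ->]]]; exists l.
by rewrite mulmxBl -mulmxA const1_mul h2 mul_mx_scalar scale1r.
Qed.

Lemma affdim_iff (R : realType) p p' (S : 'cV[R]_p -> Prop) (T : 'cV[R]_p' -> Prop) k :
  (forall j, dim_ge S j <-> dim_ge T j) -> affdim_is S k -> affdim_is T k.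
Proof. by move=> h [h1 h2]; split => // j; rewrite -h h2. Qed.

Section Main.
Variable R : realType.
Variables (m n r k s : nat) (X : 'M[R]_(m, n)) (W : 'M[R]_(m, r)) (H : 'M[R]_(r, n))
  (U : 'M[R]_(m, k)).
Hypothesis hrank : \rank X = k.+1.
Hypothesis hFBC : FBC X W H s.
Hypothesis hinj : injective (fun j : 'I_n => col j X).
Let xbar : 'cV[R]_m := n%:R^-1 *: (X *m const_mx 1).
Let Xc := X - xbar *m (const_mx 1 : 'M[R]_(1, n)).
Hypothesis hXc : \rank Xc = k.
Hypothesis hU : U^T *m U = 1%:M.
Hypothesis hUX : U *m (U^T *m Xc) = Xc.
Let Xt := U^T *m Xc.
Let Wt := U^T *m (W - xbar *m (const_mx 1 : 'M[R]_(1, r))).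

Lemma n0 : (0 < n)%N.
Proof.
case: n X hrank => [|n'] // X0; rewrite (thinmx0 X0) mxrank0 //.
Qed.

Lemma hXWH : X = W *m H.
Proof. by case: hFBC. Qed.

Lemma hH : forall j : 'I_n, (forall i, 0 <= H i j) /\ \sum_i H i j = 1.
Proof. by case: hFBC => _ [_ [h _]]. Qed.

Lemma r0 : (0 < r)%N.
Proof.
move: hrank; rewrite hXWH; case: r W H => [|r'] // W0 H0.
by rewrite (thinmx0 W0) mul0mx mxrank0.
Qed.

Lemma hds : (k.+1 <= s)%N.
Proof. by case: hFBC => _ [_ [_ [h _]]]; rewrite -hrank. Qed.

Lemma hc : forall F, is_facet (conv W) F ->
     (exists S : {set 'I_n},
        (s <= #|S|)%N /\ (forall j, j \in S -> F (col j X)) /\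
        {in S &, injective (fun j => col j X)} /\
        affdim_is (conv_sub X S) ((\rank X)%:Z - 2)).
Proof. by case: hFBC => _ [_ [_ [_ [h _]]]]. Qed.

Lemma hd : forall G, is_facet (conv X) G -> ~ is_facet (conv W) G ->
     forall S : {set 'I_n}, (forall j, j \in S -> G (col j X)) ->
       {in S &, injective (fun j => col j X)} -> (#|S| < s)%N.
Proof. by case: hFBC => _ [_ [_ [_ [_ h]]]]. Qed.

Lemma affX : affdim_is (conv X) k%:Z.
Proof. rewrite -hXc; exact: affdim_conv X n0. Qed.

Lemma convXW x : conv X x -> conv W x.
Proof. by rewrite hXWH; apply: conv_stoch; apply: hH. Qed.

Lemma Xaff x : conv X x -> U *m (U^T *m (x - xbar)) = x - xbar.
Proof.
move/convYc => [l [_ [_ e]]]; rewrite -/xbar -/Xc in e.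
by rewrite e !mulmxA -(mulmxA U) hUX.
Qed.

Lemma Wdim : affdim_is (conv W) k%:Z /\ (0 < k)%N.
Proof.
set i0 : 'I_n := Ordinal n0.
set wbar : 'cV_m := r%:R^-1 *: (W *m const_mx 1).
have [a [hle [hg [fF _]]]] := facet_exists W r0 (col i0 X - wbar).
have [S [hs [hSF [_ hSdim]]]] := hc fF.
set G := fun x => conv X x /\ dotp a x = 1 + dotp a wbar.
have [fG aG] : is_facet (conv X) G /\ affdim_is G (k%:Z - 1).
  apply: facet_of.
  - by move=> x cx; apply: hle; apply: convXW.
  - exact: affX.
  - exists (col i0 X); split; first exact: conv_col.
    move: hg; rewrite dotpBr => hg; apply/eqP; lra.
  - move=> j hj; apply: (dim_ge_subset (S := conv_sub X S)).
      move=> x hx; split; first exact: conv_sub_conv hx.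
      by apply: (conv_sub_eq _ hx) => l hl; case: (hSF l hl).
    apply/(affdimP _ hSdim); rewrite hrank; lia.
have hGS : forall j, j \in S -> G (col j X).
  by move=> j hj; split; [exact: conv_col | case: (hSF j hj)].
have fWG : is_facet (conv W) G.
  apply: NNPP => nf; have := hd fG nf hGS (in2W hinj); lia.
case: fWG => _ [k' [h1 h2]].
have ek : k' = k%:Z by have := affdim_uniq h2 aG; lia.
split; first by rewrite -ek.
have [j hj] : exists j, j \in S.
  have : (0 < #|S|)%N by have := hds; lia.
  by rewrite card_gt0 => /set0Pn.
have := dim_ge0 (hGS j hj); move/(affdimP _ aG); lia.
Qed.

Lemma Waff i : U *m (U^T *m (col i W - xbar)) = col i W - xbar.
Proof.
case: (eqVneq (U *m (U^T *m (col i W - xbar))) (col i W - xbar)) => // hne.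
exfalso.
set w := col i W.
set v := (w - xbar) - U *m (U^T *m (w - xbar)).
have vnz : v != 0 by rewrite subr_eq0 eq_sym.
have Utv : U^T *m v = 0 by rewrite /v mulmxBr [U^T *m (U *m _)]mulmxA hU mul1mx subrr.
have orth : forall y, dotp v (U *m y) = 0 by move=> y; rewrite dotp_mulr Utv dotp0l.
have [aW _] := Wdim.
have /dim_geP [M [h1 h2]] : dim_ge (conv X) k by apply/(affdimP _ affX).
have hM : forall l, dotp v (col l M) = dotp v xbar.
  move=> l; have e := Xaff (h1 l).
  by apply/eqP; rewrite -subr_eq0 -dotpBr -e orth.
have hw : dotp v w != dotp v xbar.
  rewrite -subr_eq0 -dotpBr.
  have -> : w - xbar = v + U *m (U^T *m (w - xbar)) by rewrite /v subrK.
  rewrite dotpDr orth addr0; apply/eqP => /dotpvv_eq0 h0.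
  by rewrite h0 eqxx in vnz.
have ai := AI_ext h2 hM hw.
have hcol := col_row_mx (fun l => convXW (h1 l)) (conv_col W i : conv W w).
have := dim_ge_sub (j := k.+1) hcol ai; rewrite addn1 => /(_ (leqnn _)).
move/(affdimP _ aW); lia.
Qed.

Let Wc := W - xbar *m (const_mx 1 : 'M[R]_(1, r)).

Lemma WcU : U *m (U^T *m Wc) = Wc.
Proof. by apply: col_matrixP => i; rewrite !colM colC Waff. Qed.

Lemma Wdecomp : W = U *m Wt + xbar *m const_mx 1.
Proof. by rewrite /Wt -/Wc WcU /Wc subrK. Qed.

Lemma Xdecomp : X = U *m Xt + xbar *m const_mx 1.
Proof. by rewrite /Xt hUX /Xc subrK. Qed.

Lemma WtE : Wt = U^T *m W + (- (U^T *m xbar)) *m const_mx 1.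
Proof. by rewrite /Wt mulmxBr mulmxA mulNmx. Qed.

Lemma XtE : Xt = U^T *m X + (- (U^T *m xbar)) *m const_mx 1.
Proof. by rewrite /Xt /Xc mulmxBr mulmxA mulNmx. Qed.

Lemma TW1 x : conv W x -> conv Wt (U^T *m x + - (U^T *m xbar)) /\ U *m (U^T *m x + - (U^T *m xbar)) + xbar = x.
Proof.
move=> cx; split; first exact: conv_aff WtE cx.
have [l e] := convC xbar cx.
rewrite -/Wc in e; by rewrite -mulmxBr e !mulmxA -(mulmxA U) WcU -e subrK.
Qed.

Lemma TW2 y : conv Wt y -> conv W (U *m y + xbar) /\ U^T *m (U *m y + xbar) + - (U^T *m xbar) = y.
Proof.
move=> cy; split; first exact: conv_aff Wdecomp cy.
by rewrite mulmxDr mulmxA hU mul1mx addrK.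
Qed.

Lemma TX1 x : conv X x -> conv Xt (U^T *m x + - (U^T *m xbar)) /\ U *m (U^T *m x + - (U^T *m xbar)) + xbar = x.
Proof.
move=> cx; split; first exact: conv_aff XtE cx.
by rewrite -mulmxBr Xaff // subrK.
Qed.

Lemma affWt : affdim_is (conv Wt) k%:Z.
Proof.
apply: (affdim_iff _ Wdim.1) => j; split.
  exact: dim_ge_transfer TW1.
exact: dim_ge_transfer TW2.
Qed.

Lemma convXWt y : conv Xt y -> conv Wt y.
Proof.
have e : Xt = Wt *m H.
  rewrite /Wt /Xt /Xc hXWH -mulmxA mulmxBl -mulmxA; congr (_ *m (_ - _ *m _)).
  apply/matrixP => a b; rewrite (ord1 a) !mxE -[LHS](hH b).2.
  by apply: eq_bigr => i _; rewrite mxE mul1r.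
by move=> cy; apply: (conv_stoch hH); rewrite -e.
Qed.

Lemma zero_Xt : conv Xt 0.
Proof.
have := conv_centroid Xt n0.
have -> : Xt *m (const_mx 1 : 'cV[R]_n) = 0.
  by rewrite /Xt -mulmxA (Yc_sum X n0) mulmx0.
by rewrite scaler0.
Qed.

Lemma colXt j : col j Xt = U^T *m col j X + - (U^T *m xbar).
Proof. by rewrite /Xt colM colC mulmxBr. Qed.

Lemma zero_Wt : conv Wt 0.
Proof. exact: convXWt zero_Xt. Qed.

Lemma phiE (th : 'cV[R]_k) x :
  dotp th (U^T *m x + - (U^T *m xbar)) = dotp (U *m th) x - dotp (U *m th) xbar.
Proof. by rewrite dotpDr dotpNr !dotp_mulr trmxK. Qed.

Lemma psiE (th : 'cV[R]_k) y :
  dotp (U *m th) (U *m y + xbar) = dotp th y + dotp (U *m th) xbar.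
Proof. by rewrite dotpDr dotp_mull mulmxA hU mul1mx. Qed.

Lemma forward (th : 'cV[R]_k) :
  is_facet (conv Wt) (fun y => conv Wt y /\ dotp th y = 1) ->
  is_vertex (dual (conv Xt)) th /\
  (s <= #|[set j : 'I_n | dotp (col j Xt) th == 1%R]|)%N.
Proof.
set F := fun y => conv Wt y /\ dotp th y = 1.
move=> fF; have [aW k0] := Wdim.
have aF : affdim_is F (k%:Z - 1) := facet_dims fF affWt.
case: fF => [[a [b [hab hF]]] _].
have /dim_geP [M [h1 h2]] : dim_ge F k.-1 by apply/(affdimP _ aF); lia.
have lin := AI_lin h2 (fun l => (h1 l).2).
have eab : a = b *: th.
  apply/eqP; rewrite -subr_eq0; apply/eqP.
  apply: (basis_ker2 lin); first lia.
  apply: rowv0 => l; rewrite dotpBl dotpZl (h1 l).2 mulr1.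
  by have [_ ->] := (hF (col l M)).1 (h1 l); rewrite subrr.
have b0 : 0 <= b by have := hab 0 zero_Wt; rewrite dotp0r.
have bpos : 0 < b.
  rewrite lt_neqAle b0 andbT; apply/eqP => eb.
  have : affdim_is (conv Wt) (k%:Z - 1).
    apply: affdim_ext aF => y; split; first by case.
    by move=> cy; apply/hF; rewrite eab -eb scale0r dotp0l.
  by move/(affdim_uniq affWt); lia.
have thle : forall y, conv Wt y -> dotp th y <= 1.
  move=> y cy; have := hab y cy; rewrite eab dotpZl => h.
  by rewrite -(ler_pM2l bpos) mulr1.
set G := fun x => conv W x /\ dotp (U *m th) x = 1 + dotp (U *m th) xbar.
have fG : is_facet (conv W) G.
  split.
    exists (U *m th), (1 + dotp (U *m th) xbar); split => //.
    by move=> x cx; have := thle _ (TW1 cx).1; rewrite phiE; lra.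
  exists k%:Z; split => //.
  apply: (affdim_iff _ aF) => j; split.
    apply: (dim_ge_transfer (A := U) (c := xbar) (B := U^T) (e := - (U^T *m xbar))).
    move=> y [cy ty]; have [c2 e2] := TW2 cy; split => //; split => //.
    by rewrite psiE ty.
  apply: (dim_ge_transfer (A := U^T) (c := - (U^T *m xbar)) (B := U) (e := xbar)).
  move=> x [cx tx]; have [c1 e1] := TW1 cx; split => //; split => //.
  by rewrite phiE tx addrK.
have [S [hs [hSG [_ hSdim]]]] := hc fG.
have hSA : forall j, j \in S -> dotp (col j Xt) th = 1.
  by move=> j hj; rewrite dotpC colXt phiE (hSG j hj).2 addrK.
split; last first.
  apply: leq_trans hs _; apply: subset_leq_card; apply/subsetP => j hj.
  by rewrite inE hSA.
have dualth : dual (conv Xt) th.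
  by move=> x cx; rewrite dotpC; apply: thle; apply: convXWt.
split => // y z c dy dz hc' eth.
have /dim_geP [Q [q1 q2]] : dim_ge (fun y => conv Xt y /\ dotp th y = 1) k.-1.
  apply: (dim_ge_transfer (A := U^T) (c := - (U^T *m xbar)) (B := U) (e := xbar)
     (S := conv_sub X S)).
    move=> x hx; have cx := conv_sub_conv hx; have [c1 e1] := TX1 cx.
    split => //; split => //.
    have e : dotp (U *m th) x = 1 + dotp (U *m th) xbar.
      by apply: (conv_sub_eq _ hx) => j hj; exact: (hSG j hj).2.
    by rewrite phiE e addrK.
  by apply/(affdimP _ hSdim); rewrite hrank; lia.
have lin2 := AI_lin q2 (fun l => (q1 l).2).
apply/eqP; rewrite -subr_eq0; apply/eqP; apply: (basis_ker2 lin2); first lia.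
apply: rowv0 => l; rewrite dotpBl.
have hy := dy _ (q1 l).1; have hz := dz _ (q1 l).1.
have ht := (q1 l).2; rewrite eth dotpDl !dotpZl in ht.
rewrite dotpC in hy; rewrite dotpC in hz.
move: hc' => /andP [c0 c1].
nra.
Qed.

Lemma eps_exists (A : {set 'I_n}) (g v : 'I_n -> R) :
  (forall j, j \notin A -> 0 < g j) ->
  exists eps : R, 0 < eps /\ forall j, j \notin A -> eps * `|v j| <= g j.
Proof.
move=> hg; case: (pickP (fun j => j \notin A)) => [j0 hj0|hnone]; last first.
  by exists 1; split => // j hj; have := hnone j; rewrite /= hj.
have [j1 [hj1 hmin]] := argmin_ex (fun j => g j / (1 + `|v j|)) (P := fun j => j \notin A) hj0.
have pos : forall j, 0 < 1 + `|v j| by move=> j; apply: ltr_pwDl.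
exists (g j1 / (1 + `|v j1|)); split; first by apply: divr_gt0 => //; apply: hg.
move=> j hj; have := hmin j hj; rewrite ler_pdivlMr // => h.
have := hg j hj; have := normr_ge0 (v j).
have : g j1 / (1 + `|v j1|) * (1 + `|v j|) = g j1 / (1 + `|v j1|) + g j1 / (1 + `|v j1|) * `|v j|.
  by ring.
have : 0 <= g j1 / (1 + `|v j1|) by apply: divr_ge0; [apply: ltW; apply: hg | apply: ltW].
lra.
Qed.

Lemma backward (th : 'cV[R]_k) :
  is_vertex (dual (conv Xt)) th ->
  (s <= #|[set j : 'I_n | dotp (col j Xt) th == 1%R]|)%N ->
  is_facet (conv Wt) (fun y => conv Wt y /\ dotp th y = 1).
Proof.
move=> [dth ext] hs; set A := [set j : 'I_n | dotp (col j Xt) th == 1%R] in hs *.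
have [aW k0] := Wdim.
have thle : forall j, dotp th (col j Xt) <= 1.
  by move=> j; rewrite dotpC; apply: dth; apply: conv_col.
have hA : forall j, j \in A -> dotp th (col j Xt) = 1.
  by move=> j; rewrite inE dotpC => /eqP.
have hr : \rank (zcols Xt A) = k.
  case: (ltnP (\rank (zcols Xt A)) k) => hlt; last first.
    by have := rank_leq_row (zcols Xt A); lia.
  exfalso; have [d [dnz dort]] := dichot hlt.
  have dA : forall j, j \in A -> dotp d (col j Xt) = 0.
    by move=> j hj; have := rowv0_inv j dort; rewrite col_zcols hj.
  have gpos : forall j, j \notin A -> 0 < 1 - dotp th (col j Xt).
    move=> j hj; rewrite subr_gt0 lt_neqAle thle andbT; apply: contra hj => /eqP h.
    by rewrite inE dotpC h.
  have [eps [e0 heps]] := eps_exists (fun j => dotp d (col j Xt)) gpos.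
  have hdual : forall sg : R, (sg = 1 \/ sg = -1) ->
      dual (conv Xt) (th + (sg * eps) *: d).
    move=> sg hsg x cx; rewrite dotpC; apply: (conv_le _ cx) => j.
    rewrite dotpDl dotpZl.
    case: (boolP (j \in A)) => hj; first by rewrite hA // dA // mulr0 addr0.
    have := heps j hj.
    have h1 := ler_norm (dotp d (col j Xt)).
    have h2 := ler_norm (- dotp d (col j Xt)); rewrite normrN in h2.
    have h3 : eps * dotp d (col j Xt) <= eps * `|dotp d (col j Xt)|.
      by apply: ler_wpM2l => //; apply: ltW.
    have h4 : eps * - dotp d (col j Xt) <= eps * `|dotp d (col j Xt)|.
      by apply: ler_wpM2l => //; apply: ltW.
    case: hsg => ->; rewrite ?mul1r ?mulN1r; first lra.
    rewrite mulNr; move: h4; rewrite mulrN; lra.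
  have hh : 0 < (1/2 : R) < 1 by apply/andP; split; lra.
  have ee : th = (1/2) *: (th + (1 * eps) *: d) + (1 - 1/2) *: (th + (-1 * eps) *: d).
    by apply/matrixP => a b; rewrite !mxE; field.
  have heq := ext _ _ _ (hdual 1 (or_introl erefl)) (hdual (-1) (or_intror erefl)) hh ee.
  have : d = 0.
    apply/matrixP => a b; have := congr1 (fun v : 'cV[R]_k => v a b) heq.
    rewrite !mxE => h.
    have : (eps + eps) * d a b = 0 by lra.
    move/eqP; rewrite mulf_eq0 => /orP [|/eqP //]; move/eqP => h2; lra.
  by move/eqP; rewrite (negbTE dnz).
have [K [f [eK [fi find]]]] := extract (zcols Xt A).
rewrite hr in eK.
have fact : forall l, f l \in A.
  move=> l; case: (boolP (f l \in A)) => // hl.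
  have := find (delta_mx l ord0).
  rewrite -colE mul_Sel col_zcols (negbTE hl) => /(_ erefl) /matrixP /(_ l ord0).
  by rewrite !mxE !eqxx /= => /eqP; rewrite oner_eq0.
have ez : zcols Xt A *m Sel f = Xt *m Sel f.
  by apply: col_matrixP => l; rewrite !mul_Sel col_zcols fact.
have lin : forall mu : 'cV[R]_K, Xt *m Sel f *m mu = 0 -> mu = 0.
  by move=> mu; rewrite -ez; apply: find.
have hXA : forall j, j \in A -> dotp (U *m th) (col j X) = 1 + dotp (U *m th) xbar.
  move=> j hj; have := hA j hj; rewrite colXt phiE => h; lra.
set G := fun x => conv X x /\ dotp (U *m th) x = 1 + dotp (U *m th) xbar.
have [fG aG] : is_facet (conv X) G /\ affdim_is G (k%:Z - 1).
  apply: facet_of.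
  - move=> x cx; have := dth _ (TX1 cx).1; rewrite dotpC phiE; lra.
  - exact: affX.
  - exists xbar; split; first exact: conv_centroid X n0.
    by apply/eqP; lra.
  - move=> j hj; apply: (dim_ge_sub (M := X *m Sel f)); last by rewrite eK.
      by move=> l; rewrite mul_Sel; split; [exact: conv_col | exact: hXA (fact l)].
    move=> mu h1 h2; apply: lin.
    by rewrite XtE !mulmxDl -!mulmxA (mulmxA X) h1 mulmx0 const1_mul Sel_sum h2 scal0M !mulmx0 addr0.
have fWG : is_facet (conv W) G.
  apply: NNPP => nf.
  have := hd fG nf (S := A) (fun j hj => conj (conv_col X j) (hXA j hj)) (in2W hinj).
  by move=> hh; move: (leq_trans hh hs); rewrite ltnn.
case: fWG => [[a' [b' [hab' hG']]] _].
set al := U^T *m a'; set be := b' - dotp a' xbar.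
have hle' : forall y, conv Wt y -> dotp al y <= be.
  move=> y cy; have [c2 _] := TW2 cy; have := hab' _ c2.
  by rewrite dotpDr dotp_mulr /al /be; lra.
have eal : al = be *: th.
  apply/eqP; rewrite -subr_eq0; apply/eqP; apply: (basis_ker2 lin); first lia.
  apply: rowv0 => l; rewrite mul_Sel dotpBl dotpZl (hA _ (fact l)) mulr1.
  have [_ hb] := (hG' (col (f l) X)).1 (conj (conv_col X _) (hXA _ (fact l))).
  have e1 := (TX1 (conv_col X (f l))).2.
  rewrite /al -dotp_mulr colXt.
  have -> : U *m (U^T *m col (f l) X + - (U^T *m xbar)) = col (f l) X - xbar.
    by rewrite -[in RHS]e1 addrK.
  by rewrite dotpBr hb /be subrr.
have be0 : 0 <= be by have := hle' 0 zero_Wt; rewrite dotp0r.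
have bepos : 0 < be.
  rewrite lt_neqAle be0 andbT; apply/eqP => eb.
  have cxb : conv W xbar := convXW (conv_centroid X n0).
  have : G xbar by apply/hG'; split => //; move: eb; rewrite /be; lra.
  by case => _; lra.
have thW : forall y, conv Wt y -> dotp th y <= 1.
  move=> y cy; have := hle' y cy; rewrite eal dotpZl => h.
  by rewrite -(ler_pM2l bepos) mulr1.
apply: (facet_of (K := k) thW affWt _ _).1.
  by exists 0; split; [exact: zero_Wt | rewrite dotp0r eq_sym oner_eq0].
move=> j hj; apply: (dim_ge_sub (M := Xt *m Sel f)); last by rewrite eK.
  by move=> l; rewrite mul_Sel; split; [exact: convXWt (conv_col Xt _) | exact: hA (fact l)].
exact: lin_AI lin.
Qed.

End Main.


Theorem lemma3 (R : realType) (m n r k s : nat)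
    (X : 'M[R]_(m, n)) (W : 'M[R]_(m, r)) (H : 'M[R]_(r, n))
    (U : 'M[R]_(m, k)) (Sig : 'M[R]_k) (V : 'M[R]_(n, k)) :
  (forall i j, 0 <= X i j) ->
  (forall i j, 0 <= H i j) ->
  \rank X = k.+1 ->
  FBC X W H s ->
  injective (fun j : 'I_n => col j X) ->
  let xbar : 'cV[R]_m := n%:R^-1 *: (X *m const_mx 1) in
  let Xc := X - xbar *m (const_mx 1 : 'M[R]_(1, n)) in
  \rank Xc = k ->
  (* compact SVD  Xc = U Sig V^T *)
  U^T *m U = 1%:M -> V^T *m V = 1%:M ->
  is_diag_mx Sig -> (forall i, 0 < Sig i i) ->
  (forall i j : 'I_k, (i <= j)%N -> Sig j j <= Sig i i) ->
  Xc = U *m Sig *m V^T ->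
  let Xt := U^T *m Xc in
  let Wt := U^T *m (W - xbar *m (const_mx 1 : 'M[R]_(1, r))) in
  forall theta : 'cV[R]_k,
    is_facet (conv Wt) (fun x => conv Wt x /\ dotp theta x = 1) <->
    (is_vertex (dual (conv Xt)) theta /\
     (s <= #|[set j : 'I_n | dotp (col j Xt) theta == 1%R]|)%N).
Proof.
move=> _ _ hrank hF hinj xbar Xc hXc hU _ _ _ _ hsvd Xt Wt theta.
have hUX : U *m (U^T *m Xc) = Xc.
  by rewrite hsvd -!mulmxA [U^T *m (U *m _)]mulmxA hU mul1mx.
split.
  exact: (forward hrank hF hinj hXc hU hUX).
by move=> [h1 h2]; exact: (backward hrank hF hinj hXc hU hUX h1 h2).
Qed.
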